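(* For a Pólya tree $t$ with $k$ nodes let $\tilde\rho=1+\epsilon$ be the smallest positive real number satisfying $\int_0^{\tilde\rho} e^{-w(t)v^k}\,dv = 1$. Then, as $k\to\infty$ (with $t$ ranging over Pólya trees of size $k$), \[ \tilde\rho = 1+\epsilon \sim 1 + \frac{w(t)}{k}, \quad\text{i.e. } \epsilon \sim \frac{w(t)}{k}. \]
   Context: A Pólya tree is an unlabeled rooted non-plane tree. For a Pólya tree $t$ with $k$ nodes, $\ell(t)$ is the number of labelings of its nodes by $1,\dots,k$ that increase along every path from the root, and $w(t)=\ell(t)/k!$. The number $\tilde\rho$ is the dominant singularity of $S_t(z)=\ln\frac{1}{1-\int_0^z e^{-w(t)v^k}\,dv}-w(t)z^k$, the exponential generating function of recursive trees having no fringe subtree of shape $t$. *)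

(* Defs.v *)
From Stdlib Require Import Reals.
From Coquelicot Require Import Coquelicot.
From mathcomp Require Import all_boot perm.

Set Implicit Arguments. Unset Strict Implicit. Unset Printing Implicit Defensive.

(* A recursive tree (increasingly labelled rooted non-plane tree) on k nodes,
   labels 0..k-1 (label i stands for i+1), root 0, encoded by its parent
   function: p 0 = 0 and p i < i for i > 0. *)
Definition is_rec (k : nat) (p : {ffun 'I_k -> 'I_k}) : bool :=
  [forall i, (if nat_of_ord i == 0%N then p i == i else (p i < i)%N)%N].

(* Two recursive trees have the same shape (the same underlying Pólya tree):
   there is a bijection of the node set commuting with the parent maps
   (it then necessarily maps the root to the root). *)
Definition same_shape (k : nat) (p q : {ffun 'I_k -> 'I_k}) : bool :=
  [exists s : {perm 'I_k}, [forall i, s (p i) == q (s i)]].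

(* ell(t): number of increasing labellings of the Pólya tree t = shape of p,
   i.e. number of recursive trees on k nodes whose shape is t. *)
Definition ell (k : nat) (p : {ffun 'I_k -> 'I_k}) : nat :=
  #|[set q : {ffun 'I_k -> 'I_k} | is_rec q && same_shape p q]|.

Local Open Scope R_scope.

Definition wt (k : nat) (p : {ffun 'I_k -> 'I_k}) : R :=
  INR (ell p) / INR (factorial k).

Definition Fint (w : R) (k : nat) (x : R) : R :=
  RInt (fun v => exp (- (w * v ^ k))) 0 x.

Definition smallest_root (w : R) (k : nat) (r : R) : Prop :=
  0 < r /\ Fint w k r = 1 /\
  (forall x : R, 0 < x < r -> Fint w k x <> 1).

(* Main.v *)
Require Import Defs.
From Stdlib Require Import Reals.
From Coquelicot Require Import Coquelicot.
From Stdlib Require Import Lra Psatz.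
Local Open Scope R_scope.

Lemma exp_le_exp x y : x <= y -> exp x <= exp y.
Proof. intros [H|H]; [left; apply exp_increasing; auto | subst; lra]. Qed.

Lemma f_cont a k (v : R) : continuous (fun v => exp (- (a * v ^ k))) v.
Proof. apply (ex_derive_continuous (K:=R_AbsRing) (V:=R_NormedModule)). auto_derive. easy. Qed.

Lemma f_ex a k x y : ex_RInt (fun v => exp (- (a * v ^ k))) x y.
Proof. apply (ex_RInt_continuous (V:=R_CompleteNormedModule)); intros z _; apply f_cont. Qed.

Lemma RInt_p1 a k x : RInt (fun v => 1 - a * v ^ k) 0 x = x - a * x ^ (S k) / INR (S k).
Proof.
assert (Hn : INR (S k) <> 0) by (apply not_0_INR; lia).
assert (H := @is_RInt_derive R_CompleteNormedModule (fun v => v - a * v ^ (S k) / INR (S k)) (fun v => 1 - a * v ^ k) 0 x).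
assert (D : forall y, Rmin 0 x <= y <= Rmax 0 x -> is_derive (fun v => v - a * v ^ (S k) / INR (S k)) y (1 - a * y ^ k)).
{ intros y _. auto_derive; [easy|]. change (match k with | 0%nat => 1 | S _ => INR k + 1 end) with (INR (S k)). field. auto. }
assert (C : forall y, Rmin 0 x <= y <= Rmax 0 x -> continuous (fun v => 1 - a * v ^ k) y).
{ intros y _. apply (ex_derive_continuous (K:=R_AbsRing) (V:=R_NormedModule)). auto_derive. easy. }
specialize (H D C). rewrite (is_RInt_unique _ _ _ _ H).
unfold minus, plus, opp; simpl. field. auto.
Qed.

Lemma RInt_p2 a k x : RInt (fun v => 1 - a * v ^ k + a^2 * v ^ (2*k)) 0 x =
   x - a * x ^ (S k) / INR (S k) + a^2 * x ^ (S (2*k)) / INR (S (2*k)).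
Proof.
assert (Hn : INR (S k) <> 0) by (apply not_0_INR; lia).
assert (Hm : INR (S (2*k)) <> 0) by (apply not_0_INR; lia).
assert (H := @is_RInt_derive R_CompleteNormedModule (fun v => v - a * v ^ (S k) / INR (S k) + a^2 * v ^ (S (2*k)) / INR (S (2*k))) (fun v => 1 - a * v ^ k + a^2 * v ^ (2*k)) 0 x).
assert (D : forall y, Rmin 0 x <= y <= Rmax 0 x -> is_derive (fun v => v - a * v ^ (S k) / INR (S k) + a^2 * v ^ (S (2*k)) / INR (S (2*k))) y (1 - a * y ^ k + a^2 * y ^ (2*k))).
{ intros y _. auto_derive; [easy|]. change (match k with | 0%nat => 1 | S _ => INR k + 1 end) with (INR (S k)). change (match (k + (k + 0))%nat with | 0%nat => 1 | S _ => INR (k + (k + 0)) + 1 end) with (INR (S (2*k))). change (k + (k + 0))%nat with (2*k)%nat. field. auto. }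
assert (C : forall y, Rmin 0 x <= y <= Rmax 0 x -> continuous (fun v => 1 - a * v ^ k + a^2 * v ^ (2*k)) y).
{ intros y _. apply (ex_derive_continuous (K:=R_AbsRing) (V:=R_NormedModule)). auto_derive. easy. }
specialize (H D C). rewrite (is_RInt_unique _ _ _ _ H).
unfold minus, plus, opp; simpl. field. auto.
Qed.

Lemma poly_ex a k x : ex_RInt (fun v => 1 - a * v ^ k) 0 x.
Proof. apply (ex_RInt_continuous (V:=R_CompleteNormedModule)); intros z _.
apply (ex_derive_continuous (K:=R_AbsRing) (V:=R_NormedModule)). auto_derive. easy. Qed.

Lemma poly2_ex a k x : ex_RInt (fun v => 1 - a * v ^ k + a^2 * v ^ (2*k)) 0 x.
Proof. apply (ex_RInt_continuous (V:=R_CompleteNormedModule)); intros z _.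
apply (ex_derive_continuous (K:=R_AbsRing) (V:=R_NormedModule)). auto_derive. easy. Qed.

Lemma exp_hi y : 0 <= y -> exp (- y) <= 1 - y + y^2.
Proof.
intros Hy. pose proof (exp_ineq1_le y). pose proof (exp_pos y).
assert (h : 1 <= (1 - y + y^2) * exp y).
{ assert (0 < 1 - y + y^2) by nra. assert ((1 - y + y^2) * (1 + y) <= (1 - y + y^2) * exp y) by (apply Rmult_le_compat_l; lra). nra. }
rewrite exp_Ropp. apply (Rmult_le_reg_r (exp y)); auto.
rewrite Rinv_l; lra.
Qed.

Lemma L1 a k x : 0 <= x -> x - a * x ^ (S k) / INR (S k) <= Fint a k x.
Proof.
intros Hx. rewrite <- RInt_p1. unfold Fint. apply RInt_le; auto using poly_ex, f_ex.
intros v _. pose proof (exp_ineq1_le (- (a * v ^ k))). lra.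
Qed.

Lemma L2 a k x : 0 <= a -> 0 <= x ->
  Fint a k x <= x - a * x ^ (S k) / INR (S k) + a^2 * x ^ (S (2*k)) / INR (S (2*k)).
Proof.
intros Ha Hx. rewrite <- RInt_p2. unfold Fint. apply RInt_le; auto using poly2_ex, f_ex.
intros v Hv. assert (0 <= a * v ^ k) by (apply Rmult_le_pos; auto; apply pow_le; lra).
pose proof (exp_hi _ H).
replace (v ^ (2*k)) with ((v^k)^2). nra.
rewrite <- pow_mult. f_equal. lia.
Qed.

Lemma L3 a k x : 0 <= a -> 0 <= x -> Fint a k x <= x.
Proof.
intros Ha Hx. unfold Fint.
replace x with (RInt (fun _ => 1) 0 x) at 2.
2:{ rewrite RInt_const. unfold scal; simpl. unfold mult; simpl. lra. }
apply RInt_le; auto using f_ex.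
apply (ex_RInt_continuous (V:=R_CompleteNormedModule)); intros z _.
apply (ex_derive_continuous (K:=R_AbsRing) (V:=R_NormedModule)). auto_derive. easy.
intros v Hv. assert (0 <= a * v ^ k) by (apply Rmult_le_pos; auto; apply pow_le; lra).
rewrite <- exp_0. apply exp_le_exp. lra.
Qed.

Lemma L4 a k x y : 0 <= a -> 0 <= y < x -> Fint a k y < Fint a k x.
Proof.
intros Ha Hxy. unfold Fint.
rewrite <- (RInt_Chasles _ 0 y x) by auto using f_ex.
unfold plus; simpl.
assert (RInt (fun _ => exp (- (a * x ^ k))) y x <= RInt (fun v => exp (- (a * v ^ k))) y x).
{ apply RInt_le; auto using f_ex; try lra.
  apply (ex_RInt_continuous (V:=R_CompleteNormedModule)); intros z _.
  apply (ex_derive_continuous (K:=R_AbsRing) (V:=R_NormedModule)). auto_derive. easy.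
  intros v Hv. apply exp_le_exp. assert (v ^ k <= x ^ k) by (apply pow_incr; lra). nra. }
rewrite RInt_const in H. unfold scal in H; simpl in H. unfold mult in H; simpl in H.
pose proof (exp_pos (- (a * x ^ k))). nra.
Qed.

Lemma bern m c : 0 <= c -> (1 + c) ^ m * (1 - INR m * c) <= 1.
Proof.
intros Hc. induction m as [|m IH]; [simpl; lra|]. rewrite S_INR. simpl.
assert (0 <= (1+c)^m) by (apply pow_le; lra).
assert ((1 + c) * (1 - (INR m + 1) * c) <= 1 - INR m * c).
{ assert (0 <= INR m) by apply pos_INR. nra. }
assert ((1 + c) ^ m * ((1 + c) * (1 - (INR m + 1) * c)) <= (1 + c) ^ m * (1 - INR m * c))
  by (apply Rmult_le_compat_l; auto).
nra.
Qed.

Lemma analytic (a : R) (k : nat) (r : R) : (8 <= k)%nat -> 0 < a -> a * INR k <= 1 ->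
  smallest_root a k r ->
  a * (1 - 3 / INR k) <= (r - 1) * INR k /\ (r - 1) * INR k <= a * (1 + 8 / INR k).
Proof.
intros Hk Ha Han [Hr0 [Hr1 Hmin]].
set (n := INR k) in *.
assert (Hn : 8 <= n) by (unfold n; replace 8 with (INR 8) by (simpl; lra); apply le_INR; auto).
assert (HSk : INR (S k) = n + 1) by (unfold n; apply S_INR).
assert (HS2k : INR (S (2*k)) = 2 * n + 1) by (unfold n; rewrite S_INR, mult_INR; simpl; lra).
set (c := 2 / n^2).
assert (Hc0 : 0 <= c) by (unfold c; apply Rle_mult_inv_pos; nra).
assert (Hcn : c * n^2 = 2) by (unfold c; field; lra).
set (M := (1 + c) ^ (S k)).
assert (HM0 : 1 <= M) by (apply pow_R1_Rle; lra).
assert (HM : M * (n - 4) <= n).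
{ pose proof (bern (S k) c Hc0). fold M in H. rewrite HSk in H.
  assert (n * (1 - (n+1) * c) = n - 2 * (n + 1) / n) by (unfold c; field; lra).
  assert (2 * (n+1) / n <= 4) by (apply Rmult_le_reg_r with n; [lra|]; unfold Rdiv; rewrite Rmult_assoc, Rinv_l; lra).
  assert (n - 4 <= n * (1 - (n+1) * c)) by lra.
  assert (M * (n - 4) <= M * (n * (1 - (n+1) * c))) by (apply Rmult_le_compat_l; lra).
  nra. }
assert (HM2 : M <= 2) by nra.
assert (HF : 1 <= Fint a k (1 + c)).
{ pose proof (L1 a k (1 + c)) as H. fold M in H. rewrite HSk in H.
  assert (a * M * (n - 4) <= 1) by nra.
  assert (a * M / (n + 1) <= c).
  { apply Rmult_le_reg_r with ((n+1) * n^2 * (n - 4)); [nra|].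
    replace (a * M / (n + 1) * ((n + 1) * n ^ 2 * (n - 4))) with (a * M * (n - 4) * n^2) by (field; lra).
    replace (c * ((n + 1) * n ^ 2 * (n - 4))) with (2 * (n+1) * (n-4)) by (rewrite <- Hcn; ring).
    nra. }
  assert (a * M / (n + 1) = a * (1 + c) ^ S k / (n + 1)) by reflexivity.
  lra. }
assert (Hr_ge1 : 1 <= r).
{ pose proof (L3 a k r (Rlt_le _ _ Ha) (Rlt_le _ _ Hr0)). lra. }
assert (Hr_le : r <= 1 + c).
{ destruct (Rle_or_lt r (1 + c)) as [H|H]; auto.
  pose proof (L4 a k r (1 + c) (Rlt_le _ _ Ha) (conj (ltac:(lra) : 0 <= 1 + c) H)). lra. }
set (R1 := r ^ S k).
assert (HR1 : 1 <= R1) by (apply pow_R1_Rle; lra).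
assert (HR1M : R1 <= M) by (apply pow_incr; lra).
set (R2 := r ^ S (2*k)).
assert (HR2 : R2 <= M^2).
{ assert (R2 <= r ^ (S k * 2)) by (apply Rle_pow; [lra|lia]).
  rewrite pow_mult in H. fold R1 in H.
  assert (R1^2 <= M^2) by (apply pow_incr; lra). lra. }
split.
- pose proof (L2 a k r (Rlt_le _ _ Ha) (Rlt_le _ _ Hr0)) as H.
  rewrite Hr1, HSk, HS2k in H. fold R1 R2 in H.
  assert (a * R1 / (n+1) >= a / (n+1)).
  { unfold Rdiv. apply Rle_ge. apply Rmult_le_compat_r; [apply Rlt_le, Rinv_0_lt_compat; lra|]. nra. }
  assert (a^2 * R2 / (2*n+1) <= 4 * a / (n * (2*n+1))).
  { apply Rmult_le_reg_r with (n * (2*n+1)); [nra|].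
    replace (a^2 * R2 / (2*n+1) * (n * (2*n+1))) with (a * (a * n) * R2) by (field; lra).
    replace (4 * a / (n * (2*n+1)) * (n * (2*n+1))) with (4 * a) by (field; lra).
    assert (0 <= R2) by (unfold R2; apply pow_le; lra).
    assert (a * n * R2 <= R2) by nra.
    assert (M^2 <= 4) by nra.
    assert (a * n * R2 <= 4) by lra.
    replace (a * (a * n) * R2) with (a * (a * n * R2)) by ring.
    replace (4 * a) with (a * 4) by ring.
    apply Rmult_le_compat_l; lra. }
  assert (r - 1 >= a / (n+1) - 4 * a / (n * (2*n+1))) by lra.
  assert ((r - 1) * n >= (a / (n+1) - 4 * a / (n * (2*n+1))) * n) by nra.
  assert ((a / (n+1) - 4 * a / (n * (2*n+1))) * n >= a * (1 - 3 / n)).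
  { assert ((a / (n+1) - 4 * a / (n * (2*n+1))) * n - a * (1 - 3 / n)
      = (a * ((4 * n + 3) / (n * (n+1) * (2*n+1))))) by (field; lra).
    assert (0 <= a * ((4 * n + 3) / (n * (n+1) * (2*n+1)))).
    { apply Rmult_le_pos; [lra|]. apply Rle_mult_inv_pos; nra. }
    lra. }
  lra.
- pose proof (L1 a k r (Rlt_le _ _ Hr0)) as H.
  rewrite Hr1, HSk in H. fold R1 in H.
  assert ((r - 1) * (n+1) <= a * R1).
  { assert (a * R1 / (n+1) * (n+1) = a * R1) by (field; lra). nra. }
  assert ((r-1)*(n+1)*(n-4) <= a*R1*(n-4)) by (apply Rmult_le_compat_r; lra).
  assert (a*R1*(n-4) <= a*M*(n-4)) by (apply Rmult_le_compat_r;[lra|]; apply Rmult_le_compat_l; lra).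
  assert (a*(M*(n-4)) <= a*n) by (apply Rmult_le_compat_l; lra).
  assert ((r - 1) * (n+1) * (n - 4) <= a * n) by lra.
  apply Rmult_le_reg_r with (n * (n+1) * (n-4)); [nra|].
  replace (a * (1 + 8 / n) * (n * (n + 1) * (n - 4))) with (a * ((n+8) * (n+1) * (n-4))) by (field; lra).
  assert (n^3 <= (n+8) * (n+1) * (n-4)) by nra.
  assert (n^2 * ((r - 1) * (n+1) * (n - 4)) <= n^2 * (a * n)) by (apply Rmult_le_compat_l; nra).
  assert (a * n^3 <= a * ((n+8) * (n+1) * (n-4))) by (apply Rmult_le_compat_l; lra).
  replace ((r - 1) * n * (n * (n + 1) * (n - 4))) with (n^2 * ((r - 1) * (n+1) * (n - 4))) by ring.
  replace (n^2 * (a*n)) with (a * n^3) in * by ring.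
  lra.
Qed.

From mathcomp Require Import all_boot perm.

Lemma card_lt (k x : nat) : (x <= k)%N -> #|[pred j : 'I_k | (j < x)%N]| = x.
Proof.
move=> le; rewrite -sum1_card.
have := @big_ord_widen_cond nat 0%N addn _ k (fun _ => true) (fun _ => 1%N) le.
rewrite big_const_ord iter_addn_0 mul1n => <-.
by [].
Qed.

Lemma prod_max (k : nat) : (\prod_(i < k) maxn 1 i = (k.-1)`!)%N.
Proof.
elim: k => [|k IH]; first by rewrite big_ord0.
rewrite big_ord_recr /= IH; case: k {IH} => [|k] //=.
by rewrite factS mulnC (maxn_idPr _).
Qed.

Lemma card_rec (k : nat) : (#|[set q : {ffun 'I_k -> 'I_k} | is_rec q]| = (k.-1)`!)%N.
Proof.
pose F := fun i : 'I_k => [pred j : 'I_k | if nat_of_ord i == 0%N then j == i else (j < i)%N].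
have -> : #|[set q : {ffun 'I_k -> 'I_k} | is_rec q]| = #|family F|.
  apply: eq_card => q; rewrite inE /is_rec; apply/forallP/familyP => H i; exact: H.
rewrite card_family foldrE big_image /= -prod_max.
apply: eq_bigr => i _; rewrite /F.
case: eqP => [->|ne].
  rewrite (eq_card (B := pred1 i)); first by rewrite card1.
  by move=> j; rewrite !inE.
rewrite card_lt ?(ltnW (ltn_ord i)) //.
by rewrite (maxn_idPr _) //; case: (nat_of_ord i) ne.
Qed.

Lemma ell_bound (k : nat) (p : {ffun 'I_k -> 'I_k}) : is_rec p ->
  (0 < ell p)%N /\ (ell p <= (k.-1)`!)%N.
Proof.
move=> hp; split.
  apply/card_gt0P; exists p; rewrite inE hp /=.
  apply/existsP; exists 1%g; apply/forallP => i; by rewrite !perm1.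
rewrite -card_rec; apply: subset_leq_card; apply/subsetP => q.
by rewrite !inE => /andP[].
Qed.

Local Open Scope R_scope.

Lemma wt_bounds (k : nat) (p : {ffun 'I_k -> 'I_k}) : is_rec p -> (1 <= k)%N ->
  0 < wt p /\ wt p * INR k <= 1.
Proof.
move=> hp hk; have [h1 h2] := @ell_bound k p hp.
have hf : (0 < INR (k`!)) by apply: lt_0_INR; apply/ltP; exact: fact_gt0.
have e : (k`! = k * (k.-1)`!)%N by clear -hk; case: k hk.
split.
  rewrite /wt; apply: Rdiv_lt_0_compat => //; apply: lt_0_INR; exact/ltP.
rewrite /wt.
have hl : INR (ell p) <= INR ((k.-1)`!) by apply: le_INR; exact/leP.
have hk0 : 0 <= INR k by apply: pos_INR.
have : INR (ell p) * INR k <= INR (k`!).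
  rewrite e mult_INR Rmult_comm; apply: Rmult_le_compat_l => //.
move=> H; apply (Rmult_le_reg_r (INR (k`!))) => //.
rewrite Rmult_1_l; unfold Rdiv.
replace (INR (ell p) * / INR (k`!) * INR k * INR (k`!)) with (INR (ell p) * INR k) => //.
field; lra.
Qed.

Theorem corollary2p2 :
  forall eps : R, 0 < eps ->
  exists K : nat, forall k : nat, (K <= k)%N ->
  forall p : {ffun 'I_k -> 'I_k}, is_rec p ->
  forall r : R, smallest_root (wt p) k r ->
  Rabs ((r - 1) / (wt p / INR k) - 1) <= eps.
Proof.
move=> eps heps.
have [N hN] := INR_unbounded (8 / eps).
exists (maxn 8 N) => k hk p hp r hr.
have hk8 : (8 <= k)%N by apply: leq_trans hk; exact: leq_maxl.
have hkN : (N <= k)%N by apply: leq_trans hk; exact: leq_maxr.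
have [ha han] := @wt_bounds k p hp (leq_trans (isT : (1 <= 8)%N) hk8).
have [lo hi] := analytic (wt p) k r (elimT leP hk8) ha han hr.
have hn8 : 8 <= INR k by replace 8 with (INR 8) by (simpl; lra); apply: le_INR; exact/leP.
have hnN : INR N <= INR k by apply: le_INR; exact/leP.
set n := INR k in lo hi hn8 hnN *.
set a := wt p in lo hi ha han *.
have e8 : 8 / n <= eps.
  have : 8 <= eps * n.
    have : 8 / eps * eps = 8 by field; lra.
    nra.
  move=> h; apply (Rmult_le_reg_r n); first lra.
  replace (8 / n * n) with 8 by (field; lra); lra.
have e3 : 3 / n <= 8 / n.
  unfold Rdiv; apply: Rmult_le_compat_r; last lra.
  apply: Rlt_le; apply: Rinv_0_lt_compat; lra.
have q : (r - 1) / (a / n) = (r - 1) * n / a by field; lra.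
rewrite q; apply: Rabs_le; split.
- have : a * (1 - 3 / n) / a <= (r - 1) * n / a.
    unfold Rdiv; apply: Rmult_le_compat_r => //; apply: Rlt_le; apply: Rinv_0_lt_compat; lra.
  replace (a * (1 - 3 / n) / a) with (1 - 3 / n) by (field; lra); lra.
- have : (r - 1) * n / a <= a * (1 + 8 / n) / a.
    unfold Rdiv; apply: Rmult_le_compat_r => //; apply: Rlt_le; apply: Rinv_0_lt_compat; lra.
  replace (a * (1 + 8 / n) / a) with (1 + 8 / n) by (field; lra); lra.
Qed.
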